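(* Suppose $\{x\in\mathbb{R}^n:A^\top x\le u\}=\emptyset$. Let $\mathcal{D}:=\{\lambda\in\mathbb{R}^m: A\lambda=0,\ \lambda\ge0,\ u^\top\lambda<0,\ \|\lambda\|\le1\}$, and let $r^*$ be the supremum of all $r$ for which there exists $\lambda^c$ with $A\lambda^c=0$ and $B(\lambda^c,r)\cap\mathrm{Null}(A)\subseteq\mathcal{D}$. Then $$\frac{\|P_Au\|}{\tau(A,u)\sqrt m}+1\ \le\ \frac1{r^*}\ \le\ \Big(\frac{\|P_Au\|}{\tau(A,u)}+1\Big)\Big(\frac{m}{\rho(A)}+\sqrt m+1\Big).$$
   Context: $A=[a_1|\cdots|a_m]\in\mathbb{R}^{n\times m}$ has columns of unit Euclidean norm and $\{A\lambda:\lambda\ge0\}=\mathbb{R}^n$; $u\in\mathbb{R}^m$. $\|\cdot\|$ is the Euclidean norm, $B(c,r)$ the closed Euclidean ball in $\mathbb{R}^m$, $\mathrm{Null}(A)$ the nullspace of $A$, and $P_A:=I-A^\top(AA^\top)^{-1}A$. $\tau(A,u):=|z^*|$ with $z^*:=\max_x\min_i(u_i-a_i^\top x)$. $\|M\|_{1,2}:=\max_{\|w\|_1=1}\|Mw\|_2$ and $\rho(A):=\min_{\Delta A}\{\|\Delta A\|_{1,2}:\exists v\ne0,\ (A+\Delta A)^\top v\le0\}$ (if $\rho(A)=0$ the upper bound is read as $+\infty$). *)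

(* Defs.v *)
From Stdlib Require Import Reals Lra Lia Classical ClassicalEpsilon.
Open Scope R_scope.

(* Vectors in R^k are functions nat -> R; only indices < k matter.
   A matrix A in R^{n x m} is a function nat -> nat -> R, entry A i j
   (row i < n, column j < m); column a_j = (fun i => A i j). *)

Fixpoint rsum (k : nat) (f : nat -> R) : R :=
  match k with
  | O => 0
  | S k' => rsum k' f + f k'
  end.

Definition norm2 (k : nat) (v : nat -> R) : R := sqrt (rsum k (fun i => v i * v i)).
Definition norm1 (k : nat) (v : nat -> R) : R := rsum k (fun i => Rabs (v i)).

Definition matvec (m : nat) (A : nat -> nat -> R) (lam : nat -> R) : nat -> R :=
  fun i => rsum m (fun j => A i j * lam j).
Definition tmatvec (n : nat) (A : nat -> nat -> R) (x : nat -> R) : nat -> R :=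
  fun j => rsum n (fun i => A i j * x i).

(* min_{i<k} f i  (k >= 1; for k = 0 it returns f 0, never used) *)
Fixpoint rmin_upto (k : nat) (f : nat -> R) : R :=
  match k with
  | O => f O
  | S k' => Rmin (rmin_upto k' f) (f (S k'))
  end.
Definition rmin_idx (k : nat) (f : nat -> R) : R := rmin_upto (pred k) f.

(* Supremum of a set of reals (least upper bound when it exists, 0 otherwise),
   and infimum. *)
Definition Rsup (S : R -> Prop) : R :=
  match excluded_middle_informative (exists l, is_lub S l) with
  | left H => proj1_sig (constructive_indefinite_description _ H)
  | right _ => 0
  end.
Definition Rinf (S : R -> Prop) : R := - Rsup (fun x => S (- x)).

Definition zstar (n m : nat) (A : nat -> nat -> R) (u : nat -> R) : R :=
  Rsup (fun z => exists x : nat -> R,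
          z = rmin_idx m (fun i => u i - tmatvec n A x i)).
Definition tau (n m : nat) (A : nat -> nat -> R) (u : nat -> R) : R :=
  Rabs (zstar n m A u).

Definition norm12 (n m : nat) (M : nat -> nat -> R) : R :=
  Rsup (fun y => exists w : nat -> R, norm1 m w = 1 /\ y = norm2 n (matvec m M w)).

Definition rho (n m : nat) (A : nat -> nat -> R) : R :=
  Rinf (fun y => exists (DA : nat -> nat -> R) (v : nat -> R),
          (exists i, (i < n)%nat /\ v i <> 0) /\
          (forall j, (j < m)%nat ->
             tmatvec n (fun i j => A i j + DA i j) v j <= 0) /\
          y = norm12 n m DA).

Definition in_null (n m : nat) (A : nat -> nat -> R) (lam : nat -> R) : Prop :=
  forall i, (i < n)%nat -> matvec m A lam i = 0.

Definition in_D (n m : nat) (A : nat -> nat -> R) (u lam : nat -> R) : Prop :=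
  in_null n m A lam /\
  (forall j, (j < m)%nat -> 0 <= lam j) /\
  rsum m (fun j => u j * lam j) < 0 /\
  norm2 m lam <= 1.

Definition rstar (n m : nat) (A : nat -> nat -> R) (u : nat -> R) : R :=
  Rsup (fun r => exists lc : nat -> R, in_null n m A lc /\
          forall lam, in_null n m A lam ->
            norm2 m (fun j => lam j - lc j) <= r -> in_D n m A u lam).

(* Main.v *)
Require Import Defs.
From Stdlib Require Import Reals Lra Lia Psatz List Classical ClassicalEpsilon.
Import ListNotations.
Open Scope R_scope.



Lemma rsum_ext k f g : (forall i, (i < k)%nat -> f i = g i) -> rsum k f = rsum k g.
Proof. induction k; simpl; intros H; auto. rewrite IHk by (intros; apply H; lia). rewrite H by lia; auto. Qed.

Lemma rsum_plus k f g : rsum k (fun i => f i + g i) = rsum k f + rsum k g.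
Proof. induction k; simpl; [lra|rewrite IHk; lra]. Qed.

Lemma rsum_minus k f g : rsum k (fun i => f i - g i) = rsum k f - rsum k g.
Proof. induction k; simpl; [lra|rewrite IHk; lra]. Qed.

Lemma rsum_scal k c f : rsum k (fun i => c * f i) = c * rsum k f.
Proof. induction k; simpl; [lra|rewrite IHk; lra]. Qed.

Lemma rsum_zero k : rsum k (fun _ => 0) = 0.
Proof. induction k; simpl; [lra|rewrite IHk; lra]. Qed.

Lemma rsum_le k f g : (forall i, (i < k)%nat -> f i <= g i) -> rsum k f <= rsum k g.
Proof. induction k; simpl; intros H; [lra|]. pose proof (H k ltac:(lia)). pose proof (IHk ltac:(intros; apply H; lia)). lra. Qed.

Lemma rsum_nonneg k f : (forall i, (i < k)%nat -> 0 <= f i) -> 0 <= rsum k f.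
Proof. intros H. rewrite <- (rsum_zero k). apply rsum_le; auto. Qed.

Lemma rsum_ge_term k f j : (forall i, (i < k)%nat -> 0 <= f i) -> (j < k)%nat -> f j <= rsum k f.
Proof.
  induction k; simpl; intros H Hj; [lia|].
  destruct (Nat.eq_dec j k).
  - subst. pose proof (rsum_nonneg k f ltac:(intros; apply H; lia)). lra.
  - pose proof (IHk ltac:(intros; apply H; lia) ltac:(lia)). pose proof (H k ltac:(lia)). lra.
Qed.

Lemma rsum_swap n m (F : nat -> nat -> R) :
  rsum n (fun i => rsum m (fun j => F i j)) = rsum m (fun j => rsum n (fun i => F i j)).
Proof.
  induction n; simpl.
  - rewrite rsum_zero; auto.
  - rewrite IHn. rewrite <- rsum_plus. auto.
Qed.

Lemma rsum_const1 k : rsum k (fun _ => 1) = INR k.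
Proof. induction k; simpl; [auto|]. rewrite IHk. destruct k; simpl; lra. Qed.

Lemma rsum_delta k f i : (i < k)%nat ->
  rsum k (fun j => f j * (if Nat.eqb j i then 1 else 0)) = f i.
Proof.
  induction k; simpl; intros H; [lia|].
  destruct (Nat.eq_dec i k).
  - subst. rewrite Nat.eqb_refl.
    rewrite (rsum_ext k _ (fun _ => 0)). rewrite rsum_zero. lra.
    intros j Hj. destruct (Nat.eqb_spec j k); [lia|lra].
  - rewrite IHk by lia. destruct (Nat.eqb_spec k i); [lia|lra].
Qed.

Lemma rsum_abs k f : Rabs (rsum k f) <= rsum k (fun i => Rabs (f i)).
Proof. induction k; simpl. rewrite Rabs_R0; lra.
  eapply Rle_trans; [apply Rabs_triang|lra]. Qed.

Lemma norm2_nonneg k v : 0 <= norm2 k v.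
Proof. unfold norm2. apply sqrt_pos. Qed.

Lemma sumsq_nonneg k v : 0 <= rsum k (fun i => v i * v i).
Proof. apply rsum_nonneg. intros; nra. Qed.

Lemma norm2_sq k v : norm2 k v * norm2 k v = rsum k (fun i => v i * v i).
Proof. unfold norm2. apply sqrt_sqrt, sumsq_nonneg. Qed.

Lemma norm2_ext k f g : (forall i, (i < k)%nat -> f i = g i) -> norm2 k f = norm2 k g.
Proof. intros H. unfold norm2. f_equal. apply rsum_ext. intros; rewrite H; auto. Qed.

Lemma cs_sq k f g :
  rsum k (fun i => f i * g i) * rsum k (fun i => f i * g i)
  <= rsum k (fun i => f i * f i) * rsum k (fun i => g i * g i).
Proof.
  set (a := rsum k (fun i => f i * f i)).
  set (b := rsum k (fun i => f i * g i)).
  set (c := rsum k (fun i => g i * g i)).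
  assert (Hq : forall t, 0 <= a + 2 * t * b + t * t * c).
  { intros t. assert (E : a + 2 * t * b + t * t * c = rsum k (fun i => (f i + t * g i) * (f i + t * g i))).
    { unfold a, b, c. rewrite <- !rsum_scal. rewrite <- !rsum_plus. apply rsum_ext; intros; ring. }
    rewrite E. apply sumsq_nonneg. }
  assert (Ha : 0 <= a) by apply sumsq_nonneg.
  assert (Hc : 0 <= c) by apply sumsq_nonneg.
  destruct (Req_dec c 0) as [Hc0|Hc0].
  - destruct (Req_dec b 0) as [Hb0|Hb0]. rewrite Hb0, Hc0. lra.
    exfalso. pose proof (Hq (- (a + 1) / (2 * b))) as H.
    assert (E : a + 2 * (- (a + 1) / (2 * b)) * b + (- (a + 1) / (2 * b)) * (- (a + 1) / (2 * b)) * c = -1).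
    { rewrite Hc0. field. auto. }
    lra.
  - pose proof (Hq (- b / c)) as H.
    assert (E : a + 2 * (- b / c) * b + (- b / c) * (- b / c) * c = (a * c - b * b) / c) by (field; auto).
    rewrite E in H.
    assert (0 <= a * c - b * b).
    { apply (Rmult_le_compat_r c) in H; [|lra]. unfold Rdiv in H. rewrite Rmult_assoc, Rinv_l in H by auto. lra. }
    lra.
Qed.

Lemma cs k f g : Rabs (rsum k (fun i => f i * g i)) <= norm2 k f * norm2 k g.
Proof.
  pose proof (cs_sq k f g).
  assert (H2 : Rabs (rsum k (fun i => f i * g i)) * Rabs (rsum k (fun i => f i * g i))
             <= (norm2 k f * norm2 k g) * (norm2 k f * norm2 k g)).
  { replace ((norm2 k f * norm2 k g) * (norm2 k f * norm2 k g)) with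
      ((norm2 k f * norm2 k f) * (norm2 k g * norm2 k g)) by ring.
    rewrite !norm2_sq. rewrite <- Rabs_mult. rewrite Rabs_pos_eq; [lra|]. nra. }
  pose proof (norm2_nonneg k f). pose proof (norm2_nonneg k g).
  apply Rsqr_incr_0_var; unfold Rsqr; [lra|]. apply Rmult_le_pos; auto.
Qed.

Lemma sq_le_sqrt a b : 0 <= a -> 0 <= b -> a * a <= b -> a <= sqrt b.
Proof. intros Ha Hb H. rewrite <- (sqrt_square a) by auto. apply sqrt_le_1; nra. Qed.

Lemma norm2_triang k f g : norm2 k (fun i => f i + g i) <= norm2 k f + norm2 k g.
Proof.
  unfold norm2 at 1. rewrite <- (sqrt_square (norm2 k f + norm2 k g)) by
    (pose proof (norm2_nonneg k f); pose proof (norm2_nonneg k g); lra).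
  apply sqrt_le_1. apply sumsq_nonneg.
  pose proof (norm2_nonneg k f); pose proof (norm2_nonneg k g); nra.
  replace (rsum k (fun i => (f i + g i) * (f i + g i))) with
    (rsum k (fun i => f i * f i) + 2 * rsum k (fun i => f i * g i) + rsum k (fun i => g i * g i)).
  2:{ rewrite <- rsum_scal, <- !rsum_plus. apply rsum_ext; intros; ring. }
  rewrite <- !norm2_sq. pose proof (cs k f g). pose proof (Rle_abs (rsum k (fun i => f i * g i))). nra.
Qed.

Lemma norm2_scal k c f : norm2 k (fun i => c * f i) = Rabs c * norm2 k f.
Proof.
  unfold norm2. rewrite (rsum_ext k _ (fun i => (c * c) * (f i * f i))) by (intros; ring).
  rewrite rsum_scal. rewrite sqrt_mult_alt by nra. f_equal.
  rewrite <- sqrt_Rsqr_abs. unfold Rsqr. auto.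
Qed.

Lemma norm2_opp_diff k f g : norm2 k (fun i => f i - g i) = norm2 k (fun i => g i - f i).
Proof.
  rewrite (norm2_ext k (fun i => f i - g i) (fun i => -1 * (g i - f i))) by (intros; ring).
  rewrite norm2_scal. rewrite Rabs_left by lra. ring. Qed.

Lemma abs_le_norm2 k f j : (j < k)%nat -> Rabs (f j) <= norm2 k f.
Proof.
  intros Hj. unfold norm2. apply sq_le_sqrt. apply Rabs_pos. apply sumsq_nonneg.
  rewrite <- Rabs_mult. rewrite Rabs_pos_eq by nra.
  apply (rsum_ge_term k (fun i => f i * f i)); auto. intros; nra.
Qed.

Lemma norm2_le_sum k f : (forall i, (i < k)%nat -> 0 <= f i) -> norm2 k f <= rsum k f.
Proof.
  intros H. unfold norm2. apply Rsqr_incr_0_var. rewrite Rsqr_sqrt by apply sumsq_nonneg.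
  2: apply rsum_nonneg; auto.
  unfold Rsqr. induction k; simpl. lra.
  pose proof (IHk ltac:(intros; apply H; lia)). pose proof (H k ltac:(lia)).
  pose proof (rsum_nonneg k f ltac:(intros; apply H; lia)). nra.
Qed.

Lemma norm2_ones k : norm2 k (fun _ => 1) = sqrt (INR k).
Proof. unfold norm2. rewrite (rsum_ext k _ (fun _ => 1)) by (intros; ring). rewrite rsum_const1; auto. Qed.

Lemma sum_le_sqrt_norm k f : rsum k f <= sqrt (INR k) * norm2 k f.
Proof.
  rewrite <- norm2_ones. rewrite (rsum_ext k f (fun i => 1 * f i)) by (intros; ring).
  eapply Rle_trans; [apply Rle_abs| apply cs].
Qed.

Lemma norm2_pos k v : (exists i, (i < k)%nat /\ v i <> 0) -> 0 < norm2 k v.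
Proof.
  intros [i [Hi Hv]]. pose proof (abs_le_norm2 k v i Hi). pose proof (Rabs_pos_lt _ Hv). lra.
Qed.



Lemma Rsup_lub (S : R -> Prop) : (exists x, S x) -> (exists b, forall x, S x -> x <= b) ->
  is_lub S (Rsup S).
Proof.
  intros Hne [b Hb]. unfold Rsup.
  destruct (excluded_middle_informative (exists l, is_lub S l)) as [H|H].
  - exact (proj2_sig (constructive_indefinite_description _ H)).
  - exfalso. apply H. destruct (completeness S) as [l Hl]; [exists b; exact Hb|auto|].
    exists l; auto.
Qed.

Lemma Rsup_ge (S : R -> Prop) y : S y -> (exists b, forall x, S x -> x <= b) -> y <= Rsup S.
Proof. intros Hy Hb. destruct (Rsup_lub S ltac:(eauto) Hb) as [H1 _]. apply H1; auto. Qed.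

Lemma Rsup_le (S : R -> Prop) b : (exists x, S x) -> (forall x, S x -> x <= b) -> Rsup S <= b.
Proof. intros Hne Hb. destruct (Rsup_lub S Hne ltac:(eauto)) as [_ H2]. apply H2. intros x Hx; auto. Qed.

Definition cstr := ((nat -> R) * R)%type.
Definition sat (n : nat) (x : nat -> R) (c : cstr) := rsum n (fun i => fst c i * x i) <= snd c.

Inductive deriv (L : list cstr) : cstr -> Prop :=
| dv_in c : In c L -> deriv L c
| dv_zero : deriv L (fun _ => 0, 0)
| dv_add g1 h1 g2 h2 : deriv L (g1, h1) -> deriv L (g2, h2) ->
    deriv L (fun i => g1 i + g2 i, h1 + h2)
| dv_scale a g h : 0 <= a -> deriv L (g, h) -> deriv L (fun i => a * g i, a * h).

Lemma deriv_closed (L : list cstr) (P : cstr -> Prop) :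
  P (fun _ => 0, 0) ->
  (forall g1 h1 g2 h2, P (g1, h1) -> P (g2, h2) -> P (fun i => g1 i + g2 i, h1 + h2)) ->
  (forall a g h, 0 <= a -> P (g, h) -> P (fun i => a * g i, a * h)) ->
  (forall c, In c L -> P c) -> forall c, deriv L c -> P c.
Proof. intros H0 Ha Hs Hin c D. induction D; auto. Qed.

Definition posb (k : nat) (c : cstr) : bool := if Rlt_dec 0 (fst c k) then true else false.
Definition negb' (k : nat) (c : cstr) : bool := if Rlt_dec (fst c k) 0 then true else false.
Definition zerob (k : nat) (c : cstr) : bool := if Req_EM_T (fst c k) 0 then true else false.

Definition comb (k : nat) (p q : cstr) : cstr :=
  (fun i => (- fst q k) * fst p i + fst p k * fst q i, (- fst q k) * snd p + fst p k * snd q).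

Definition elimL (k : nat) (L : list cstr) : list cstr :=
  filter (zerob k) L ++ flat_map (fun p => map (comb k p) (filter (negb' k) L)) (filter (posb k) L).

Lemma elim_mem k L c : In c (elimL k L) ->
  (In c L /\ fst c k = 0) \/
  (exists p q, In p L /\ In q L /\ 0 < fst p k /\ fst q k < 0 /\ c = comb k p q).
Proof.
  unfold elimL. intros H. apply in_app_or in H. destruct H as [H|H].
  - apply filter_In in H. destruct H as [H1 H2]. unfold zerob in H2.
    destruct (Req_EM_T (fst c k) 0); [left; auto|discriminate].
  - right. apply in_flat_map in H. destruct H as [p [Hp Hc]].
    apply in_map_iff in Hc. destruct Hc as [q [Hq Hq2]].
    apply filter_In in Hp. apply filter_In in Hq2.
    destruct Hp as [Hp Hp2]; destruct Hq2 as [Hq2 Hq3].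
    unfold posb in Hp2; unfold negb' in Hq3.
    destruct (Rlt_dec 0 (fst p k)); [|discriminate].
    destruct (Rlt_dec (fst q k) 0); [|discriminate].
    exists p, q; repeat split; auto.
Qed.

Lemma elim_deriv k L c : In c (elimL k L) -> deriv L c.
Proof.
  intros H. destruct (elim_mem k L c H) as [[H1 _]|[p [q [Hp [Hq [Hpk [Hqk ->]]]]]]].
  - apply dv_in; auto.
  - destruct p as [gp hp]; destruct q as [gq hq]. simpl in *. unfold comb; simpl.
    apply (dv_add L (fun i => - gq k * gp i) (- gq k * hp) (fun i => gp k * gq i) (gp k * hq)).
    + apply dv_scale; [lra|]. apply dv_in; auto.
    + apply dv_scale; [lra|]. apply dv_in; auto.
Qed.

Lemma elim_zero k L c : In c (elimL k L) -> fst c k = 0.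
Proof.
  intros H. destruct (elim_mem k L c H) as [[_ H1]|[p [q [_ [_ [_ [_ ->]]]]]]]; auto.
  unfold comb; simpl; ring.
Qed.

Lemma choose_between {T : Type} (lo up : list T) (f g : T -> R) :
  (forall a b, In a lo -> In b up -> f a <= g b) ->
  exists x, (forall a, In a lo -> f a <= x) /\ (forall b, In b up -> x <= g b).
Proof.
  induction lo as [|a lo IH]; intros H.
  - clear H. induction up as [|b up IHu].
    + exists 0; split; intros; contradiction.
    + destruct IHu as [x0 [_ Hx0]]. exists (Rmin (g b) x0). split; [intros; contradiction|].
      intros b' [<-|Hb']. apply Rmin_l. eapply Rle_trans; [apply Rmin_r|auto].
  - destruct IH as [x0 [H1 H2]]. { intros; apply H; simpl; auto. }
    exists (Rmax (f a) x0). split.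
    + intros a' [<-|Ha']. apply Rmax_l. eapply Rle_trans; [apply H1; auto|apply Rmax_r].
    + intros b Hb. apply Rmax_lub. apply H; simpl; auto. apply H2; auto.
Qed.

Lemma fm_extend n L x' : (forall c, In c (elimL n L) -> sat n x' c) ->
  exists x, forall c, In c L -> sat (S n) x c.
Proof.
  intros Hsat.
  set (s := fun c : cstr => rsum n (fun i => fst c i * x' i)).
  set (bnd := fun c : cstr => (snd c - s c) / fst c n).
  destruct (choose_between (filter (negb' n) L) (filter (posb n) L) bnd bnd) as [xn [Hlo Hup]].
  { intros q p Hq Hp. apply filter_In in Hq; apply filter_In in Hp.
    destruct Hq as [Hq Hq2]; destruct Hp as [Hp Hp2]. unfold posb in Hp2; unfold negb' in Hq2.
    destruct (Rlt_dec 0 (fst p n)) as [Hpn|]; [|discriminate].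
    destruct (Rlt_dec (fst q n) 0) as [Hqn|]; [|discriminate].
    assert (Hc : In (comb n p q) (elimL n L)).
    { unfold elimL. apply in_or_app. right. apply in_flat_map. exists p. split.
      apply filter_In; split; auto. unfold posb. destruct (Rlt_dec 0 (fst p n)); [auto|contradiction].
      apply in_map. apply filter_In; split; auto. unfold negb'. destruct (Rlt_dec (fst q n) 0); [auto|contradiction]. }
    pose proof (Hsat _ Hc) as Hs. unfold sat, comb in Hs; simpl in Hs.
    rewrite rsum_ext with (g := fun i => (- fst q n) * (fst p i * x' i) + fst p n * (fst q i * x' i)) in Hs
      by (intros; ring).
    rewrite rsum_plus, !rsum_scal in Hs. fold (s p) in Hs. fold (s q) in Hs.
    unfold bnd.
    assert (E1 : (snd q - s q) / fst q n * fst q n = snd q - s q) by (field; lra).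
    assert (E2 : (snd p - s p) / fst p n * fst p n = snd p - s p) by (field; lra).
    set (lo := (snd q - s q) / fst q n) in *. set (up := (snd p - s p) / fst p n) in *.
    assert (0 <= fst p n * (- fst q n) * (up - lo)) by nra.
    apply Rmult_le_reg_l with (r := fst p n * - fst q n). nra. nra. }
  exists (fun i => if Nat.eqb i n then xn else x' i).
  intros c Hc. unfold sat. simpl. rewrite Nat.eqb_refl.
  rewrite (rsum_ext n _ (fun i => fst c i * x' i)).
  2:{ intros i Hi. destruct (Nat.eqb_spec i n); [lia|auto]. }
  fold (s c).
  destruct (Rtotal_order (fst c n) 0) as [Hn|[Hn|Hn]].
  - assert (Hb : bnd c <= xn). { apply Hlo. apply filter_In; split; auto. unfold negb'. destruct (Rlt_dec (fst c n) 0); [auto|contradiction]. }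
    unfold bnd in Hb. assert (E : (snd c - s c) / fst c n * fst c n = snd c - s c) by (field; lra).
    nra.
  - assert (Hz : In c (elimL n L)).
    { unfold elimL. apply in_or_app. left. apply filter_In; split; auto. unfold zerob.
      destruct (Req_EM_T (fst c n) 0); [auto|contradiction]. }
    pose proof (Hsat c Hz). unfold sat in H. fold (s c) in H. rewrite Hn. lra.
  - assert (Hb : xn <= bnd c). { apply Hup. apply filter_In; split; auto. unfold posb. destruct (Rlt_dec 0 (fst c n)); [auto|contradiction]. }
    unfold bnd in Hb. assert (E : (snd c - s c) / fst c n * fst c n = snd c - s c) by (field; lra).
    nra.
Qed.

Theorem farkas n : forall L : list cstr,
  (~ exists x, forall c, In c L -> sat n x c) ->
  exists g h, deriv L (g, h) /\ (forall i, (i < n)%nat -> g i = 0) /\ h < 0.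
Proof.
  induction n; intros L Hinf.
  - apply not_ex_all_not with (n := fun _ : nat => 0) in Hinf.
    apply not_all_ex_not in Hinf. destruct Hinf as [c Hc].
    apply imply_to_and in Hc. destruct Hc as [Hc Hns]. unfold sat in Hns; simpl in Hns.
    exists (fst c), (snd c). split. destruct c; apply dv_in; auto. split. intros; lia. lra.
  - destruct (IHn (elimL n L)) as [g [h [Hd [Hg Hh]]]].
    { intros [x' Hx']. apply Hinf. apply (fm_extend n L x'). auto. }
    exists g, h. split; [|split; auto].
    + apply (deriv_closed (elimL n L) (deriv L)); auto.
      * apply dv_zero.
      * intros; apply dv_add; auto.
      * intros; apply dv_scale; auto.
      * intros; apply elim_deriv with n; auto.
    + assert (Hgn : g n = 0).
      { apply (deriv_closed (elimL n L) (fun c => fst c n = 0)) in Hd; auto.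
        simpl; auto. intros g1 h1 g2 h2 H1 H2; simpl in *; lra.
        intros a g0 h0 _ H1; simpl in *; rewrite H1; ring.
        intros c Hc; apply (elim_zero n L c Hc). }
      intros i Hi. destruct (Nat.eq_dec i n); [subst; auto|apply Hg; lia].
Qed.



Lemma dot_lin m (c f g : nat -> R) a b :
  rsum m (fun j => c j * (a * f j + b * g j)) = a * rsum m (fun j => c j * f j) + b * rsum m (fun j => c j * g j).
Proof.
  rewrite (rsum_ext m _ (fun j => a * (c j * f j) + b * (c j * g j))) by (intros; ring).
  rewrite rsum_plus, !rsum_scal. auto.
Qed.

Lemma matvec_lin m A (f g : nat -> R) a b i :
  matvec m A (fun j => a * f j + b * g j) i = a * matvec m A f i + b * matvec m A g i.
Proof. unfold matvec. apply dot_lin. Qed.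

Lemma null_lin n m A f g a b : in_null n m A f -> in_null n m A g ->
  in_null n m A (fun j => a * f j + b * g j).
Proof. intros Hf Hg i Hi. rewrite matvec_lin, Hf, Hg by auto. ring. Qed.

Lemma sum_pos m (lam c : nat -> R) : (forall j, (j < m)%nat -> 0 <= lam j) ->
  rsum m (fun j => c j * lam j) <> 0 -> 0 < rsum m lam.
Proof.
  intros H Hc. destruct (Rle_lt_or_eq_dec 0 (rsum m lam) (rsum_nonneg m lam H)) as [|E]; auto.
  exfalso. apply Hc. rewrite (rsum_ext m _ (fun _ => 0)). apply rsum_zero.
  intros j Hj. pose proof (rsum_ge_term m lam j H Hj). pose proof (H j Hj).
  assert (lam j = 0) by lra. rewrite H2; ring.
Qed.

Lemma L_F n m A (c : nat -> R) :
  (~ exists x, forall j, (j < m)%nat -> tmatvec n A x j <= c j) ->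
  exists lam, (forall j, (j < m)%nat -> 0 <= lam j) /\ in_null n m A lam /\
              rsum m (fun j => c j * lam j) < 0.
Proof.
  intros Hinf.
  set (L := map (fun j => ((fun i => A i j), c j)) (seq 0 m)).
  destruct (farkas n L) as [g [h [Hd [Hg Hh]]]].
  { intros [x Hx]. apply Hinf. exists x. intros j Hj.
    apply (Hx ((fun i => A i j), c j)). unfold L. apply in_map_iff. exists j; split; auto.
    apply in_seq; lia. }
  pose (P := fun cc : cstr => exists lam, (forall j, (j < m)%nat -> 0 <= lam j) /\
     (forall i, fst cc i = rsum m (fun j => A i j * lam j)) /\ snd cc = rsum m (fun j => c j * lam j)).
  assert (HP : P (g, h)).
  { apply (deriv_closed L P); auto.
    - exists (fun _ => 0). split; [intros; lra|]. simpl. split.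
      intros i. rewrite (rsum_ext m _ (fun _ => 0)) by (intros; ring). rewrite rsum_zero; auto.
      rewrite (rsum_ext m _ (fun _ => 0)) by (intros; ring). rewrite rsum_zero; auto.
    - intros g1 h1 g2 h2 [l1 [H1 [H2 H3]]] [l2 [H4 [H5 H6]]]. exists (fun j => 1 * l1 j + 1 * l2 j).
      simpl in *. split. intros j Hj; specialize (H1 j Hj); specialize (H4 j Hj); lra.
      split. intros i. rewrite dot_lin, H2, H5; ring. rewrite dot_lin, H3, H6; ring.
    - intros a g0 h0 Ha [l1 [H1 [H2 H3]]]. exists (fun j => a * l1 j + 0 * l1 j). simpl in *.
      split. intros j Hj; specialize (H1 j Hj); nra.
      split. intros i. rewrite dot_lin, H2; ring. rewrite dot_lin, H3; ring.
    - intros cc Hcc. unfold L in Hcc. apply in_map_iff in Hcc. destruct Hcc as [j [<- Hj]].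
      apply in_seq in Hj. exists (fun k => if Nat.eqb k j then 1 else 0). simpl. split.
      intros k _. destruct (Nat.eqb k j); lra.
      split. intros i. rewrite rsum_delta; auto; lia. rewrite rsum_delta; auto; lia. }
  destruct HP as [lam [H1 [H2 H3]]]. simpl in *. exists lam. split; auto. split.
  intros i Hi. unfold matvec. rewrite <- H2. apply Hg; auto. lra.
Qed.

Lemma rmin_le k f j : (j <= k)%nat -> rmin_upto k f <= f j.
Proof.
  induction k; simpl; intros H.
  - assert (j = 0%nat) by lia. subst; lra.
  - destruct (Nat.eq_dec j (S k)). subst. apply Rmin_r.
    eapply Rle_trans; [apply Rmin_l|apply IHk; lia].
Qed.

Lemma rmin_ge k f t : (forall j, (j <= k)%nat -> t <= f j) -> t <= rmin_upto k f.
Proof.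
  induction k; simpl; intros H. apply H; lia.
  apply Rmin_glb. apply IHk; intros; apply H; lia. apply H; lia.
Qed.

Definition Zset n m A u := (fun z => exists x : nat -> R,
          z = rmin_idx m (fun i => u i - tmatvec n A x i)).

Lemma zset_bound n m A u lam (Hm : (1 <= m)%nat) :
  (forall j, (j < m)%nat -> 0 <= lam j) -> in_null n m A lam -> 0 < rsum m lam ->
  forall z, Zset n m A u z -> z <= rsum m (fun j => u j * lam j) / rsum m lam.
Proof.
  intros H0 HN Hs z [x ->].
  set (mn := rmin_idx m (fun i => u i - tmatvec n A x i)).
  assert (Hle : rsum m (fun j => mn * lam j) <= rsum m (fun j => (u j - tmatvec n A x j) * lam j)).
  { apply rsum_le. intros j Hj. apply Rmult_le_compat_r; auto. unfold mn, rmin_idx.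
    apply (rmin_le (pred m) (fun i => u i - tmatvec n A x i) j); lia. }
  rewrite rsum_scal in Hle.
  assert (E : rsum m (fun j => (u j - tmatvec n A x j) * lam j) = rsum m (fun j => u j * lam j)).
  { rewrite (rsum_ext m _ (fun j => u j * lam j - tmatvec n A x j * lam j)) by (intros; ring).
    rewrite rsum_minus. unfold tmatvec.
    rewrite (rsum_ext m (fun j => rsum n (fun i => A i j * x i) * lam j)
                        (fun j => rsum n (fun i => x i * (A i j * lam j)))).
    2:{ intros j _. rewrite Rmult_comm, <- rsum_scal. apply rsum_ext; intros; ring. }
    rewrite <- rsum_swap.
    rewrite (rsum_ext n _ (fun _ => 0)). rewrite rsum_zero; ring.
    intros i Hi. rewrite rsum_scal. fold (matvec m A lam i). rewrite HN; auto; ring. }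
  rewrite E in Hle. apply Rmult_le_reg_r with (rsum m lam); auto.
  unfold Rdiv. rewrite Rmult_assoc, Rinv_l by lra. lra.
Qed.

Lemma zstar_facts n m A u lam (Hm : (1 <= m)%nat) :
  (forall j, (j < m)%nat -> 0 <= lam j) -> in_null n m A lam -> 0 < rsum m lam ->
  is_lub (Zset n m A u) (zstar n m A u).
Proof.
  intros H0 HN Hs. unfold zstar. fold (Zset n m A u). apply Rsup_lub.
  exists (rmin_idx m (fun i => u i - tmatvec n A (fun _ => 0) i)). exists (fun _ => 0); auto.
  exists (rsum m (fun j => u j * lam j) / rsum m lam). apply (zset_bound n m A u lam); auto.
Qed.

Lemma zstar_le n m A u lam (Hm : (1 <= m)%nat) :
  (forall j, (j < m)%nat -> 0 <= lam j) -> in_null n m A lam -> 0 < rsum m lam ->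
  zstar n m A u <= rsum m (fun j => u j * lam j) / rsum m lam.
Proof.
  intros H0 HN Hs. destruct (zstar_facts n m A u lam Hm H0 HN Hs) as [_ H2]. apply H2.
  intros z Hz. apply (zset_bound n m A u lam); auto.
Qed.

(* strong duality, approximate *)
Lemma F2 n m A u lam1 (Hm : (1 <= m)%nat) :
  (forall j, (j < m)%nat -> 0 <= lam1 j) -> in_null n m A lam1 -> 0 < rsum m lam1 ->
  forall t, zstar n m A u < t ->
  exists l0, (forall j, (j < m)%nat -> 0 <= l0 j) /\ in_null n m A l0 /\ rsum m l0 = 1 /\
    rsum m (fun j => u j * l0 j) < t.
Proof.
  intros H0 HN Hs t Ht.
  destruct (L_F n m A (fun j => u j - t)) as [lam [L0 [LN Lneg]]].
  { intros [x Hx]. destruct (zstar_facts n m A u lam1 Hm H0 HN Hs) as [Hub _].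
    assert (Hz : Zset n m A u (rmin_idx m (fun i => u i - tmatvec n A x i))) by (exists x; auto).
    specialize (Hub _ Hz). assert (t <= rmin_idx m (fun i => u i - tmatvec n A x i)).
    { unfold rmin_idx. apply rmin_ge. intros j Hj. specialize (Hx j ltac:(lia)). lra. }
    lra. }
  assert (Hsl : 0 < rsum m lam). { apply (sum_pos m lam (fun j => u j - t)); auto; lra. }
  exists (fun j => / rsum m lam * lam j + 0 * lam j). split.
  intros j Hj. specialize (L0 j Hj). assert (0 < / rsum m lam) by (apply Rinv_0_lt_compat; auto). nra.
  split. apply (null_lin n m A); auto.
  split. rewrite (rsum_ext m _ (fun j => / rsum m lam * lam j)) by (intros; ring).
  rewrite rsum_scal. field; lra.
  rewrite dot_lin.
  rewrite (rsum_ext m (fun j => (u j - t) * lam j) (fun j => u j * lam j - t * lam j)) in Lneg by (intros; ring).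
  rewrite rsum_minus, rsum_scal in Lneg.
  apply Rmult_lt_reg_l with (rsum m lam); auto.
  replace (rsum m lam * (/ rsum m lam * rsum m (fun j => u j * lam j) + 0 * rsum m (fun j => u j * lam j)))
    with (rsum m (fun j => u j * lam j)) by (field; lra). lra.
Qed.



Definition RS n m A u := (fun r => exists lc : nat -> R, in_null n m A lc /\
          forall lam, in_null n m A lam ->
            norm2 m (fun j => lam j - lc j) <= r -> in_D n m A u lam).

Lemma rstar_RS n m A u : rstar n m A u = Rsup (RS n m A u).
Proof. reflexivity. Qed.

Lemma abs_bounds x : - Rabs x <= x <= Rabs x.
Proof. unfold Rabs; destruct (Rcase_abs x); lra. Qed.

Lemma construct n m A u p
  (Hup : forall lam, in_null n m A lam -> rsum m (fun j => u j * lam j) = rsum m (fun j => p j * lam j))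
  l0 lb a K beta :
  (forall j, (j < m)%nat -> 0 <= l0 j) -> in_null n m A l0 -> norm2 m l0 <= 1 ->
  rsum m (fun j => p j * l0 j) <= - a ->
  (forall j, (j < m)%nat -> 1 <= lb j) -> in_null n m A lb -> norm2 m lb <= K ->
  0 < beta -> beta * norm2 m p * (K + 1) < a ->
  RS n m A u (beta / (1 + beta * (K + 1))).
Proof.
  intros H0 N0 Nm0 Hp0 H1 N1 Nm1 Hb Hba.
  pose proof (norm2_nonneg m lb) as Nlb. pose proof (norm2_nonneg m p) as Np.
  pose proof (norm2_nonneg m l0) as Nl0.
  assert (Hden : 0 < 1 + beta * (K + 1)) by nra.
  set (al := / (1 + beta * (K + 1))).
  assert (Hal : 0 < al) by (apply Rinv_0_lt_compat; auto).
  assert (Eal : al * (1 + beta * (K + 1)) = 1) by (unfold al; field; lra).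
  unfold Rdiv. fold al.
  set (lc := fun j => al * l0 j + (al * beta) * lb j).
  exists lc. split. apply null_lin; auto.
  intros lam HN Hd. set (d := fun j => lam j - lc j) in *.
  assert (Elam : forall j, lam j = 1 * lc j + 1 * d j) by (intros; unfold d; ring).
  split; auto. split; [|split].
  - intros j Hj. pose proof (abs_le_norm2 m d j Hj). pose proof (abs_bounds (d j)).
    rewrite Elam. unfold lc. specialize (H0 j Hj). specialize (H1 j Hj).
    assert (0 <= al * l0 j) by nra. assert (al * beta <= al * beta * lb j) by nra. lra.
  - rewrite Hup by auto.
    rewrite (rsum_ext m _ (fun j => p j * (1 * lc j + 1 * d j))) by (intros; rewrite <- Elam; auto).
    rewrite dot_lin. unfold lc. rewrite dot_lin.
    pose proof (cs m p lb) as C1. pose proof (cs m p d) as C2.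
    pose proof (abs_bounds (rsum m (fun j => p j * lb j))).
    pose proof (abs_bounds (rsum m (fun j => p j * d j))).
    assert (T1 : rsum m (fun j => p j * lb j) <= norm2 m p * K) by nra.
    assert (T2 : rsum m (fun j => p j * d j) <= norm2 m p * (al * beta)) by nra.
    assert (T3 : al * beta * rsum m (fun j => p j * lb j) <= al * beta * (norm2 m p * K)).
    { apply Rmult_le_compat_l; nra. }
    assert (T4 : al * rsum m (fun j => p j * l0 j) <= al * (- a)) by (apply Rmult_le_compat_l; lra).
    assert (T5 : al * (- a + beta * norm2 m p * (K + 1)) < 0).
    { assert (- a + beta * norm2 m p * (K + 1) < 0) by lra. nra. }
    nra.
  - rewrite (norm2_ext m lam (fun j => lc j + d j)) by (intros; unfold d; ring).
    eapply Rle_trans; [apply norm2_triang|].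
    unfold lc. eapply Rle_trans. apply Rplus_le_compat_r. apply norm2_triang.
    rewrite !norm2_scal. rewrite !Rabs_pos_eq by nra.
    assert (al * norm2 m l0 <= al) by nra.
    assert (al * beta * norm2 m lb <= al * beta * K) by (apply Rmult_le_compat_l; nra).
    nra.
Qed.

Lemma rs_upper n m A u p (Hm : (1 <= m)%nat)
  (Hup : forall lam, in_null n m A lam -> rsum m (fun j => u j * lam j) = rsum m (fun j => p j * lam j))
  (pN : in_null n m A p) r :
  RS n m A u r -> 0 < r ->
  r * norm2 m p <= - zstar n m A u * sqrt (INR m) * (1 - r) /\ 0 <= - zstar n m A u /\ r < 1.
Proof.
  intros [lc [HNc Hd]] Hr.
  assert (Hz : norm2 m (fun j => lc j - lc j) = 0).
  { rewrite (norm2_ext m _ (fun j => 0 * lc j)) by (intros; ring). rewrite norm2_scal, Rabs_R0. ring. }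
  destruct (Hd lc HNc ltac:(lra)) as [_ [L0 [Lneg Ln1]]].
  assert (Hs : 0 < rsum m lc) by (apply (sum_pos m lc u); auto; lra).
  pose proof (sum_le_sqrt_norm m lc) as Hsq.
  pose proof (sqrt_pos (INR m)) as Hsqm.
  pose proof (norm2_nonneg m lc) as Hn0.
  assert (Hnc : 0 < norm2 m lc).
  { destruct (Rle_lt_or_eq_dec 0 _ Hn0) as [|E]; auto. rewrite <- E in Hsq. lra. }
  assert (Hnr : norm2 m lc + r <= 1).
  { set (c := r / norm2 m lc).
    assert (Hc : 0 < c) by (unfold c; apply Rdiv_lt_0_compat; auto).
    destruct (Hd (fun j => (1 + c) * lc j + 0 * lc j)) as [_ [_ [_ Hn1]]].
    - apply null_lin; auto.
    - rewrite (norm2_ext m _ (fun j => c * lc j)) by (intros; ring).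
      rewrite norm2_scal, Rabs_pos_eq by lra. unfold c. right; field; lra.
    - rewrite (norm2_ext m _ (fun j => (1 + c) * lc j)) in Hn1 by (intros; ring).
      rewrite norm2_scal, Rabs_pos_eq in Hn1 by lra.
      replace ((1 + c) * norm2 m lc) with (norm2 m lc + r) in Hn1 by (unfold c; field; lra). auto. }
  assert (Hpl : r * norm2 m p <= - rsum m (fun j => p j * lc j)).
  { rewrite Hup in Lneg by auto.
    pose proof (norm2_nonneg m p) as Np.
    destruct (Rle_lt_or_eq_dec 0 _ Np) as [Hp|E].
    - set (c := r / norm2 m p).
      destruct (Hd (fun j => 1 * lc j + c * p j)) as [_ [_ [Hneg _]]].
      + apply null_lin; auto.
      + rewrite (norm2_ext m _ (fun j => c * p j)) by (intros; ring).
        rewrite norm2_scal, Rabs_pos_eq. unfold c. right; field; lra.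
        unfold c; apply Rlt_le, Rdiv_lt_0_compat; auto.
      + rewrite Hup in Hneg by (apply null_lin; auto).
        rewrite dot_lin in Hneg.
        rewrite <- norm2_sq in Hneg.
        replace (c * (norm2 m p * norm2 m p)) with (r * norm2 m p) in Hneg by (unfold c; field; lra).
        lra.
    - rewrite <- E. lra. }
  pose proof (zstar_le n m A u lc Hm L0 HNc Hs) as Hzl.
  rewrite Hup in Hzl by auto.
  assert (Hz2 : zstar n m A u * rsum m lc <= rsum m (fun j => p j * lc j)).
  { apply Rmult_le_compat_r with (r := rsum m lc) in Hzl; [|lra].
    unfold Rdiv in Hzl. rewrite Rmult_assoc, Rinv_l in Hzl by lra. lra. }
  pose proof (norm2_nonneg m p).
  assert (Htau : 0 <= - zstar n m A u) by nra.
  split; [|split]; [|auto|lra].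
  assert (- zstar n m A u * rsum m lc <= - zstar n m A u * (sqrt (INR m) * norm2 m lc))
    by (apply Rmult_le_compat_l; auto).
  assert (- zstar n m A u * sqrt (INR m) * norm2 m lc <= - zstar n m A u * sqrt (INR m) * (1 - r)).
  { apply Rmult_le_compat_l; [nra|lra]. }
  nra.
Qed.



Lemma Rsup_nonneg_elem (S : R -> Prop) y : S y -> 0 <= y -> 0 <= Rsup S.
Proof.
  intros Hy H0. unfold Rsup.
  destruct (excluded_middle_informative (exists l, is_lub S l)) as [H|H]; [|lra].
  pose proof (proj2_sig (constructive_indefinite_description _ H)) as [Hl _].
  specialize (Hl y Hy). lra.
Qed.

Lemma div_nonneg a b : 0 <= a -> 0 < b -> 0 <= a / b.
Proof. intros. unfold Rdiv. apply Rmult_le_pos; auto. left; apply Rinv_0_lt_compat; auto. Qed.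

Lemma div_lt a b c : 0 < b -> a < c * b -> a / b < c.
Proof. intros Hb H. apply Rmult_lt_reg_r with b; auto. unfold Rdiv. rewrite Rmult_assoc, Rinv_l by lra. lra. Qed.

Definition delta (i : nat) : nat -> R := fun k => if Nat.eqb k i then 1 else 0.

Lemma norm1_delta m : (1 <= m)%nat -> norm1 m (delta 0) = 1.
Proof.
  intros Hm. unfold norm1. rewrite (rsum_ext m _ (fun j => 1 * delta 0 j)).
  apply (rsum_delta m (fun _ => 1) 0); lia.
  intros j _. unfold delta. destruct (Nat.eqb j 0). rewrite Rabs_R1; ring. rewrite Rabs_R0; ring.
Qed.

Lemma norm12_nonneg n m M : (1 <= m)%nat -> 0 <= norm12 n m M.
Proof.
  intros Hm. unfold norm12. apply (Rsup_nonneg_elem _ (norm2 n (matvec m M (delta 0)))).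
  exists (delta 0). split; auto. apply norm1_delta; auto. apply norm2_nonneg.
Qed.

Lemma finite_max k (f : nat -> R) b : (forall j, (j < k)%nat -> f j < b) ->
  exists K, K < b /\ forall j, (j < k)%nat -> f j <= K.
Proof.
  induction k; intros H.
  - exists (b - 1). split; [lra|intros; lia].
  - destruct IHk as [K [HK HK2]]. intros; apply H; lia.
    exists (Rmax K (f k)). split. { apply Rmax_lub_lt; [auto|apply H; lia]. }
    intros j Hj. destruct (Nat.eq_dec j k). subst; apply Rmax_r.
    eapply Rle_trans; [apply HK2; lia|apply Rmax_l].
Qed.

Lemma tmatvec_lin n A (f g : nat -> R) a b j :
  tmatvec n A (fun i => a * f i + b * g i) j = a * tmatvec n A f j + b * tmatvec n A g j.
Proof. unfold tmatvec. apply (dot_lin n (fun i => A i j)). Qed.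

Lemma rho_prop n m A (Hm : (1 <= m)%nat) (hrho : 0 < rho n m A) v :
  (exists i, (i < n)%nat /\ v i <> 0) ->
  exists j, (j < m)%nat /\ rho n m A * norm2 n v <= tmatvec n A v j.
Proof.
  intros Hv. apply NNPP. intros Hno.
  assert (Hlt : forall j, (j < m)%nat -> tmatvec n A v j < rho n m A * norm2 n v).
  { intros j Hj. apply Rnot_le_lt. intros Hle. apply Hno. exists j; auto. }
  pose proof (norm2_pos n v Hv) as Hnv. set (nv := norm2 n v) in *.
  set (c := fun j => Rmax (tmatvec n A v j) 0 / (nv * nv)).
  assert (Hc0 : forall j, 0 <= c j).
  { intros j. unfold c. apply div_nonneg. apply Rmax_r. nra. }
  destruct (finite_max m (fun j => c j * nv) (rho n m A)) as [K0 [HK0 HK0b]].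
  { intros j Hj. unfold c. replace (Rmax (tmatvec n A v j) 0 / (nv * nv) * nv) with
      (Rmax (tmatvec n A v j) 0 / nv) by (field; lra).
    apply div_lt; auto. apply Rmax_lub_lt. apply Hlt; auto. nra. }
  set (DA := fun i j => - (c j * v i)).
  assert (Hn12 : norm12 n m DA <= K0).
  { unfold norm12. apply Rsup_le.
    - exists (norm2 n (matvec m DA (delta 0))). exists (delta 0). split; auto. apply norm1_delta; auto.
    - intros y [w [Hw ->]].
      rewrite (norm2_ext n _ (fun i => (- rsum m (fun j => c j * w j)) * v i)).
      2:{ intros i _. unfold matvec, DA. rewrite (rsum_ext m _ (fun j => (- v i) * (c j * w j))) by (intros; ring).
          rewrite rsum_scal. change (rsum m (A i)) with (rsum m (fun j => A i j)). ring. }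
      rewrite norm2_scal. fold nv. rewrite Rabs_Ropp.
      assert (Hs : Rabs (rsum m (fun j => c j * w j)) * nv <= rsum m (fun j => K0 * Rabs (w j))).
      { eapply Rle_trans. apply Rmult_le_compat_r. lra. apply rsum_abs.
        rewrite Rmult_comm, <- rsum_scal. apply rsum_le. intros j Hj.
        rewrite Rabs_mult, (Rabs_pos_eq (c j)) by auto.
        specialize (HK0b j Hj). simpl in HK0b. pose proof (Rabs_pos (w j)). nra. }
      rewrite rsum_scal in Hs. unfold norm1 in Hw. rewrite Hw in Hs. lra. }
  assert (Hle : rho n m A <= norm12 n m DA).
  { unfold rho, Rinf. apply Ropp_le_cancel. rewrite Ropp_involutive.
    apply Rsup_ge.
    - exists DA, v. split; auto. split.
      + intros j Hj. unfold tmatvec, DA.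
        rewrite (rsum_ext n _ (fun i => A i j * v i - c j * (v i * v i))) by (intros; ring).
        rewrite rsum_minus, rsum_scal. rewrite <- norm2_sq. fold nv. fold (tmatvec n A v j).
        unfold c. replace (Rmax (tmatvec n A v j) 0 / (nv * nv) * (nv * nv)) with (Rmax (tmatvec n A v j) 0)
          by (field; lra).
        pose proof (Rmax_l (tmatvec n A v j) 0). lra.
      + ring.
    - exists 0. intros x [DA' [v' [_ [_ Hx]]]]. pose proof (norm12_nonneg n m DA' Hm). lra. }
  lra.
Qed.

Lemma F3 n m A (Hm : (1 <= m)%nat)
  (hcol : forall j, (j < m)%nat -> norm2 n (fun i => A i j) = 1)
  (hrho : 0 < rho n m A) :
  exists lb, (forall j, (j < m)%nat -> 1 <= lb j) /\ in_null n m A lb /\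
    norm2 m lb <= INR m / rho n m A + sqrt (INR m).
Proof.
  set (T := INR m / rho n m A).
  assert (HT : 0 <= T) by (unfold T; apply div_nonneg; [apply pos_INR|lra]).
  set (b := fun i => - rsum m (fun j => A i j)).
  set (L1 := map (fun j => ((fun k => if Nat.eqb k j then -1 else 0), 0)) (seq 0 m)).
  set (L2 := [((fun _ : nat => 1), T)]).
  set (L3 := map (fun i => ((fun j => A i j), b i)) (seq 0 n)).
  set (L4 := map (fun i => ((fun j => - A i j), - b i)) (seq 0 n)).
  destruct (classic (exists nu, forall cc, In cc (L1 ++ L2 ++ L3 ++ L4) -> sat m nu cc)) as [[nu Hnu]|Hinf].
  - assert (Hnn : forall j, (j < m)%nat -> 0 <= nu j).
    { intros j Hj. assert (H : In ((fun k => if Nat.eqb k j then -1 else 0), 0) (L1 ++ L2 ++ L3 ++ L4)).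
      { apply in_or_app; left. unfold L1. apply in_map_iff. exists j; split; auto. apply in_seq; lia. }
      specialize (Hnu _ H). unfold sat in Hnu; simpl in Hnu.
      rewrite (rsum_ext m _ (fun k => (- nu k) * (if Nat.eqb k j then 1 else 0))) in Hnu.
      rewrite rsum_delta in Hnu by auto. lra.
      intros k _. destruct (Nat.eqb k j); ring. }
    assert (Hsum : rsum m nu <= T).
    { assert (H : In ((fun _ : nat => 1), T) (L1 ++ L2 ++ L3 ++ L4)).
      { apply in_or_app; right; apply in_or_app; left. simpl; auto. }
      specialize (Hnu _ H). unfold sat in Hnu; simpl in Hnu.
      rewrite (rsum_ext m _ nu) in Hnu by (intros; ring). auto. }
    assert (Heq : forall i, (i < n)%nat -> matvec m A nu i = b i).
    { intros i Hi.
      assert (H3 : In ((fun j => A i j), b i) (L1 ++ L2 ++ L3 ++ L4)).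
      { apply in_or_app; right; apply in_or_app; right; apply in_or_app; left.
        unfold L3. apply in_map_iff. exists i; split; auto. apply in_seq; lia. }
      assert (H4 : In ((fun j => - A i j), - b i) (L1 ++ L2 ++ L3 ++ L4)).
      { apply in_or_app; right; apply in_or_app; right; apply in_or_app; right.
        unfold L4. apply in_map_iff. exists i; split; auto. apply in_seq; lia. }
      pose proof (Hnu _ H3) as S3. pose proof (Hnu _ H4) as S4. unfold sat in S3, S4; simpl in S3, S4.
      rewrite (rsum_ext m _ (fun j => -1 * (A i j * nu j) + 0 * (A i j * nu j))) in S4 by (intros; ring).
      rewrite rsum_plus, !rsum_scal in S4. unfold matvec. lra. }
    exists (fun j => 1 * (fun _ => 1) j + 1 * nu j). split; [|split].
    + intros j Hj. specialize (Hnn j Hj). lra.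
    + intros i Hi. rewrite matvec_lin. rewrite Heq by auto. unfold b, matvec.
      rewrite (rsum_ext m (fun j => A i j * 1) (fun j => A i j)) by (intros; ring). ring.
    + eapply Rle_trans. apply norm2_triang.
      rewrite (norm2_ext m (fun j => 1 * 1) (fun _ => 1)) by (intros; ring).
      rewrite (norm2_ext m (fun j => 1 * nu j) nu) by (intros; ring).
      rewrite norm2_ones. pose proof (norm2_le_sum m nu Hnn). fold T. lra.
  - destruct (farkas m _ Hinf) as [g [h [Hd [Hg Hh]]]].
    pose (P := fun cc : cstr => exists (xi : nat -> R) (s : R) (x : nat -> R),
       (forall j, 0 <= xi j) /\ 0 <= s /\
       (forall j, fst cc j = - xi j + s + tmatvec n A x j) /\
       snd cc = s * T + rsum n (fun i => b i * x i)).
    assert (Hx0 : forall j, tmatvec n A (fun _ => 0) j = 0).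
    { intros j. unfold tmatvec. rewrite (rsum_ext n _ (fun _ => 0)) by (intros; ring). apply rsum_zero. }
    assert (Hb0 : rsum n (fun i => b i * 0) = 0).
    { rewrite (rsum_ext n _ (fun _ => 0)) by (intros; ring). apply rsum_zero. }
    assert (HP : P (g, h)).
    { apply (deriv_closed (L1 ++ L2 ++ L3 ++ L4) P); auto.
      - exists (fun _ => 0), 0, (fun _ => 0). simpl. split; [intros; lra|]. split; [lra|].
        split. intros j. rewrite Hx0. ring. rewrite Hb0. ring.
      - intros g1 h1 g2 h2 [x1 [s1 [y1 [A1 [B1 [C1 D1]]]]]] [x2 [s2 [y2 [A2 [B2 [C2 D2]]]]]].
        exists (fun j => x1 j + x2 j), (s1 + s2), (fun i => 1 * y1 i + 1 * y2 i). simpl in *.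
        split. intros j; specialize (A1 j); specialize (A2 j); lra. split. lra.
        split. intros j. rewrite tmatvec_lin, C1, C2. ring.
        rewrite (dot_lin n b y1 y2 1 1), D1, D2. ring.
      - intros a g0 h0 Ha [x1 [s1 [y1 [A1 [B1 [C1 D1]]]]]].
        exists (fun j => a * x1 j), (a * s1), (fun i => a * y1 i + 0 * y1 i). simpl in *.
        split. intros j; specialize (A1 j); nra. split. nra.
        split. intros j. rewrite tmatvec_lin, C1. ring.
        rewrite (dot_lin n b y1 y1 a 0), D1. ring.
      - intros cc Hcc. apply in_app_or in Hcc. destruct Hcc as [Hcc|Hcc].
        { unfold L1 in Hcc. apply in_map_iff in Hcc. destruct Hcc as [j [<- _]].
          exists (delta j), 0, (fun _ => 0). simpl. split.
          intros k; unfold delta; destruct (Nat.eqb k j); lra. split; [lra|]. split.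
          intros k. rewrite Hx0. unfold delta. destruct (Nat.eqb k j); ring. rewrite Hb0; ring. }
        apply in_app_or in Hcc. destruct Hcc as [Hcc|Hcc].
        { destruct Hcc as [<-|[]]. exists (fun _ => 0), 1, (fun _ => 0). simpl. split.
          intros; lra. split; [lra|]. split. intros k. rewrite Hx0; ring. rewrite Hb0; ring. }
        apply in_app_or in Hcc. destruct Hcc as [Hcc|Hcc].
        { unfold L3 in Hcc. apply in_map_iff in Hcc. destruct Hcc as [i [<- Hi]]. apply in_seq in Hi.
          exists (fun _ => 0), 0, (delta i). simpl. split. intros; lra. split; [lra|]. split.
          intros j. unfold tmatvec, delta. rewrite rsum_delta by lia. ring.
          unfold delta. rewrite rsum_delta by lia. ring. }
        { unfold L4 in Hcc. apply in_map_iff in Hcc. destruct Hcc as [i [<- Hi]]. apply in_seq in Hi.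
          exists (fun _ => 0), 0, (fun k => -1 * delta i k + 0 * delta i k). simpl. split. intros; lra. split; [lra|]. split.
          intros j. rewrite tmatvec_lin. unfold tmatvec, delta. rewrite rsum_delta by lia. ring.
          rewrite dot_lin. unfold delta. rewrite rsum_delta by lia. ring. } }
    destruct HP as [xi [s [x [Hxi [Hs [Hgx Hhx]]]]]]. simpl in Hgx, Hhx.
    assert (Hcol : forall j, (j < m)%nat -> - s <= tmatvec n A x j).
    { intros j Hj. specialize (Hg j Hj). rewrite Hgx in Hg. specialize (Hxi j). lra. }
    assert (Hbx : rsum n (fun i => b i * x i) = - rsum m (fun j => tmatvec n A x j)).
    { unfold b, tmatvec. rewrite (rsum_ext n _ (fun i => -1 * rsum m (fun j => A i j * x i))).
      rewrite rsum_scal, rsum_swap. ring.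
      intros i _. rewrite (rsum_ext m (fun j => A i j * x i) (fun j => x i * A i j)) by (intros; ring).
      rewrite rsum_scal. change (rsum m (A i)) with (rsum m (fun j => A i j)). ring. }
    destruct (classic (exists i, (i < n)%nat /\ x i <> 0)) as [Hx|Hx].
    + destruct (rho_prop n m A Hm hrho (fun i => -1 * x i + 0 * x i)) as [j0 [Hj0 Hrj]].
      { destruct Hx as [i [Hi Hxi']]. exists i; split; auto. lra. }
      rewrite tmatvec_lin in Hrj. rewrite (norm2_ext n _ (fun i => -1 * x i)) in Hrj by (intros; ring).
      rewrite norm2_scal in Hrj. rewrite Rabs_left in Hrj by lra.
      specialize (Hcol j0 Hj0).
      assert (Hub : rsum m (fun j => tmatvec n A x j) <= rsum m (fun _ => norm2 n x * 1)).
      { apply rsum_le. intros j Hj. unfold tmatvec.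
        pose proof (cs n (fun i => A i j) x) as C. rewrite hcol in C by auto.
        pose proof (abs_bounds (rsum n (fun i => A i j * x i))). lra. }
      rewrite rsum_scal, rsum_const1 in Hub.
      assert (HsT : INR m * norm2 n x <= s * T).
      { unfold T. replace (INR m * norm2 n x) with ((rho n m A * norm2 n x) * (INR m / rho n m A)) by (field; lra).
        apply Rmult_le_compat_r; auto. lra. }
      lra.
    + assert (Hz : rsum n (fun i => b i * x i) = 0).
      { rewrite (rsum_ext n _ (fun _ => 0)). apply rsum_zero. intros i Hi.
        destruct (Req_dec (x i) 0) as [E|E]. rewrite E; ring. exfalso; apply Hx; eauto. }
      assert (0 <= s * T) by nra. lra.
Qed.



Theorem lemma12 (n m : nat) (A : nat -> nat -> R) (u : nat -> R)
  (hcol : forall j, (j < m)%nat -> norm2 n (fun i => A i j) = 1)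
  (hspan : forall y : nat -> R, exists lam : nat -> R,
      (forall j, (j < m)%nat -> 0 <= lam j) /\
      (forall i, (i < n)%nat -> matvec m A lam i = y i))
  (hinfeas : ~ exists x : nat -> R, forall j, (j < m)%nat -> tmatvec n A x j <= u j)
  (w : nat -> R)
  (hw : forall i, (i < n)%nat ->
      matvec n (fun i k => rsum m (fun j => A i j * A k j)) w i = matvec m A u i) :
  let PAu := fun j => u j - tmatvec n A w j in
  norm2 m PAu / (tau n m A u * sqrt (INR m)) + 1 <= / rstar n m A u /\
  (0 < rho n m A ->
   / rstar n m A u <=
   (norm2 m PAu / tau n m A u + 1) * (INR m / rho n m A + sqrt (INR m) + 1)).
Proof.
  intros p.
  assert (Hm : (1 <= m)%nat).
  { destruct m; [|lia]. exfalso. apply hinfeas. exists (fun _ => 0). intros; lia. }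
  assert (pN : in_null n m A p).
  { intros i Hi. unfold matvec, p.
    rewrite (rsum_ext m _ (fun j => A i j * u j - rsum n (fun k => w k * (A i j * A k j)))).
    2:{ intros j _. unfold tmatvec. rewrite Rmult_minus_distr_l. f_equal.
        rewrite <- rsum_scal. apply rsum_ext; intros; ring. }
    rewrite rsum_minus. rewrite <- rsum_swap.
    rewrite (rsum_ext n _ (fun k => rsum m (fun j => A i j * A k j) * w k)).
    2:{ intros k _. rewrite rsum_scal. ring. }
    specialize (hw i Hi). unfold matvec in hw. rewrite hw. ring. }
  assert (Hup : forall lam, in_null n m A lam ->
     rsum m (fun j => u j * lam j) = rsum m (fun j => p j * lam j)).
  { intros lam HN. apply Rminus_diag_uniq. rewrite <- rsum_minus.
    rewrite (rsum_ext m _ (fun j => rsum n (fun k => w k * (A k j * lam j)))).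
    2:{ intros j _. replace (u j * lam j - p j * lam j) with (lam j * tmatvec n A w j) by (unfold p; ring).
        unfold tmatvec. rewrite <- rsum_scal. apply rsum_ext; intros; ring. }
    rewrite <- rsum_swap. rewrite (rsum_ext n _ (fun _ => 0)). apply rsum_zero.
    intros k Hk. rewrite rsum_scal. fold (matvec m A lam k). rewrite HN by auto. ring. }
  destruct (L_F n m A u hinfeas) as [lam1 [L10 [L1N L1neg]]].
  assert (Hs1 : 0 < rsum m lam1) by (apply (sum_pos m lam1 u); auto; lra).
  assert (Hzneg : zstar n m A u < 0).
  { pose proof (zstar_le n m A u lam1 Hm L10 L1N Hs1).
    assert (rsum m (fun j => u j * lam1 j) / rsum m lam1 < 0).
    { unfold Rdiv. assert (0 < / rsum m lam1) by (apply Rinv_0_lt_compat; auto). nra. }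
    lra. }
  assert (Etau : tau n m A u = - zstar n m A u) by (unfold tau; apply Rabs_left; auto).
  set (tau' := tau n m A u) in *.
  assert (Htau : 0 < tau') by lra.
  assert (Hsqm : 0 < sqrt (INR m)) by (apply sqrt_lt_R0; apply lt_0_INR; lia).
  pose proof (norm2_nonneg m p) as Np.
  destruct (hspan (fun i => - matvec m A (fun _ => 1) i)) as [lam [Hl0 Hl]].
  set (lb := fun j => 1 * (fun _ => 1) j + 1 * lam j).
  assert (lbN : in_null n m A lb).
  { intros i Hi. unfold lb. rewrite matvec_lin, Hl by auto. ring. }
  assert (lb1 : forall j, (j < m)%nat -> 1 <= lb j).
  { intros j Hj. unfold lb. specialize (Hl0 j Hj). lra. }
  set (B := tau' * sqrt (INR m) / (norm2 m p + tau' * sqrt (INR m))).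
  assert (Hts : 0 < tau' * sqrt (INR m)) by nra.
  assert (HB : 0 < B) by (unfold B; apply Rdiv_lt_0_compat; lra).
  assert (RSb : forall r, RS n m A u r -> r <= B).
  { intros r Hr. destruct (Rle_lt_dec r 0) as [|Hr0]; [lra|].
    destruct (rs_upper n m A u p Hm Hup pN r Hr Hr0) as [H1 [_ _]].
    rewrite <- Etau in H1. fold tau' in H1.
    unfold B. apply Rmult_le_reg_r with (norm2 m p + tau' * sqrt (INR m)); [lra|].
    unfold Rdiv. rewrite Rmult_assoc, Rinv_l by lra. nra. }
  assert (RSne : exists r, RS n m A u r).
  { exists (-1). exists (fun _ => 0). split.
    - intros i Hi. unfold matvec. rewrite (rsum_ext m _ (fun _ => 0)) by (intros; ring). apply rsum_zero.
    - intros lam' _ Hle. pose proof (norm2_nonneg m (fun j => lam' j - 0)). lra. }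
  assert (Hlub : is_lub (RS n m A u) (rstar n m A u)).
  { rewrite rstar_RS. apply Rsup_lub; eauto. }
  destruct Hlub as [Hub Hleast].
  assert (Hrpos : 0 < rstar n m A u).
  { destruct (F2 n m A u lam1 Hm L10 L1N Hs1 (zstar n m A u / 2)) as [l0 [L00 [L0N [L0s L0u]]]]; [lra|].
    set (a := tau' / 2). set (K := norm2 m lb). pose proof (norm2_nonneg m lb) as NK. fold K in NK.
    set (q := norm2 m p * (K + 1)).
    assert (Hq : 0 <= q) by (unfold q; nra).
    set (beta := a / (2 * (q + 1))).
    assert (Hbeta : 0 < beta) by (unfold beta, a; apply Rdiv_lt_0_compat; lra).
    assert (Hba : beta * norm2 m p * (K + 1) < a).
    { replace (beta * norm2 m p * (K + 1)) with (a * q / (2 * (q + 1))) by (unfold beta, q; field; unfold q in Hq; lra).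
      apply div_lt; [lra|]. unfold a; nra. }
    assert (Hr : RS n m A u (beta / (1 + beta * (K + 1)))).
    { apply (construct n m A u p Hup l0 lb a K beta); auto.
      - rewrite <- L0s. apply norm2_le_sum; auto.
      - rewrite <- Hup by auto. unfold a. lra.
      - unfold K; lra. }
    specialize (Hub _ Hr). assert (0 < beta / (1 + beta * (K + 1))) by (apply Rdiv_lt_0_compat; nra).
    lra. }
  split.
  - assert (Hrb : rstar n m A u <= B) by (apply Hleast; intros r Hr; apply RSb; auto).
    replace (norm2 m p / (tau' * sqrt (INR m)) + 1) with (/ B) by (unfold B; field; lra).
    apply Rinv_le_contravar; auto.
  - intros hrho.
    destruct (F3 n m A Hm hcol hrho) as [lb2 [Lb21 [Lb2N Lb2n]]].
    set (K0 := INR m / rho n m A + sqrt (INR m)) in *.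
    assert (HK0 : 0 <= K0) by (pose proof (norm2_nonneg m lb2); lra).
    set (Q := (norm2 m p / tau' + 1) * (K0 + 1)).
    replace (INR m / rho n m A + sqrt (INR m) + 1) with (K0 + 1) by (unfold K0; ring).
    fold Q.
    assert (HQ : K0 + 1 <= Q).
    { unfold Q. assert (0 <= norm2 m p / tau') by (apply div_nonneg; auto). nra. }
    assert (HQt : Q * tau' = (norm2 m p + tau') * (K0 + 1)) by (unfold Q; field; lra).
    assert (Hle : / Q <= rstar n m A u).
    { apply Rnot_lt_le. intros Hlt.
      set (r' := (rstar n m A u + / Q) / 2).
      assert (Hr1 : rstar n m A u < r') by (unfold r'; lra).
      assert (Hr2 : r' < / Q) by (unfold r'; lra).
      assert (HrQ : r' * Q < 1).
      { apply Rmult_lt_compat_r with (r := Q) in Hr2; [|lra]. rewrite Rinv_l in Hr2 by lra. lra. }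
      set (D := 1 - r' * (K0 + 1)).
      assert (HD : 0 < D) by (unfold D; nra).
      set (beta := r' / D).
      assert (Hbeta : 0 < beta) by (unfold beta; apply Rdiv_lt_0_compat; lra).
      assert (Hbt : beta * norm2 m p * (K0 + 1) < tau').
      { unfold beta. apply Rmult_lt_reg_r with D; auto.
        replace (r' / D * norm2 m p * (K0 + 1) * D) with (r' * norm2 m p * (K0 + 1)) by (field; lra).
        unfold D. assert (r' * (Q * tau') < tau') by nra. rewrite HQt in H. nra. }
      set (a := (beta * norm2 m p * (K0 + 1) + tau') / 2).
      destruct (F2 n m A u lam1 Hm L10 L1N Hs1 (- a)) as [l0 [L00 [L0N [L0s L0u]]]].
      { unfold a. lra. }
      assert (Hr : RS n m A u (beta / (1 + beta * (K0 + 1)))).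
      { apply (construct n m A u p Hup l0 lb2 a K0 beta); auto.
        - rewrite <- L0s. apply norm2_le_sum; auto.
        - rewrite <- Hup by auto. lra.
        - unfold a; lra. }
      replace (beta / (1 + beta * (K0 + 1))) with r' in Hr by (unfold beta, D in *; field; lra).
      specialize (Hub _ Hr). lra. }
    assert (0 < / Q) by (apply Rinv_0_lt_compat; lra).
    replace Q with (/ / Q) by (field; lra).
    apply Rinv_le_contravar; auto.
Qed.
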